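(* For $c=(c_3,c_4)\in\mathbb{C}^2$ let $R_c=\{(c_1,c_2)\in\mathbb{C}^2: 2c_4c_1^2+2c_1=c_2^2+2ic_3c_2\}\setminus\{(0,0),(0,-2ic_3)\}$. On $R_c$ consider the meromorphic $1$-forms \[\alpha=\Big(\frac{i}{c_1}-\frac{c_3}{c_1(c_2+ic_3)}\Big)dc_1,\qquad \omega_2=\frac{c_1}{c_2+ic_3}\,dc_1,\] and regard their periods over cycles $\gamma$ on $R_c$ as analytic functions of $c$. Then there is a loop $\Gamma$ in $\mathbb{C}^2\setminus\{(c_3,0):c_3\in\mathbb{C}\}$ (and a cycle $\gamma$ on $R_c$, transported continuously along $\Gamma$) such that after analytic continuation along one circuit of $\Gamma$, the period $\int_\gamma\alpha$ turns into $-4\pi-\int_\gamma\alpha$ and the period $\int_\gamma\omega_2$ changes sign.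
   Context: The curve $R_c$ is the reduced level set of the complexified planar Kepler problem: $c_1$ plays the role of a holomorphic square root of $x_1^2+x_2^2$, $c_3$ is the angular momentum and $c_4$ the energy, and $\omega_2$ together with $\alpha$ arise as the coefficients of $dc_4$ and (part of) the coefficient of $dc_3$ in the holomorphic symplectic form. On the line $c_4=0$ the curve $2c_4c_1^2+2c_1=c_2^2+2ic_3c_2$ degenerates (it is homeomorphic to $\mathbb{C}$ rather than $\mathbb{C}^*$). *)

(* Defs.v *)
From Stdlib Require Import Reals.
From Coquelicot Require Import Coquelicot.

Open Scope C_scope.

Definition Ci : C := (0%R, 1%R).

Definition in_Rc (c3 c4 c1 c2 : C) : Prop :=
  2 * c4 * (c1 * c1) + 2 * c1 = c2 * c2 + 2 * Ci * c3 * c2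
  /\ ~ (c1 = RtoC 0 /\ c2 = RtoC 0)
  /\ ~ (c1 = RtoC 0 /\ c2 = - (2 * Ci * c3)).

Definition alpha_coef (c3 c1 c2 : C) : C :=
  Ci / c1 - c3 / (c1 * (c2 + Ci * c3)).

Definition omega2_coef (c3 c1 c2 : C) : C :=
  c1 / (c2 + Ci * c3).

Definition line_integral (f : C -> C -> C) (g1 g2 : R -> C) (v : C) : Prop :=
  exists d1 : R -> C,
    (forall t : R, is_derive g1 t (d1 t)) /\
    is_RInt (fun t : R => f (g1 t) (g2 t) * d1 t) 0%R 1%R v.

(* Main.v *)
From Pilot Require Import Defs.
From Stdlib Require Import Reals Lra.
From Coquelicot Require Import Coquelicot.
Import Pilot.Defs.

Open Scope C_scope.


Lemma Cpair_derive (f g : R -> R) (x f' g' : R) :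
  is_derive f x f' -> is_derive g x g' ->
  is_derive (fun t => (f t, g t) : C) x ((f', g') : C).
Proof.
  intros Hf Hg.
  unfold is_derive in *.
  pose proof (@filterdiff_comp'_2 R_AbsRing R_NormedModule R_NormedModule R_NormedModule
     (prod_NormedModule R_AbsRing R_NormedModule R_NormedModule)
     f g (fun a b => (a, b)) x _ _ (fun a b => (a, b)) Hf Hg) as H.
  apply H.
  eapply filterdiff_ext_lin.
  eapply filterdiff_ext. 2: apply filterdiff_id.
  intros [a b]; reflexivity.
  intros [a b]; reflexivity.
Qed.

Lemma Cpair_cont {U : UniformSpace} (f g : U -> R) x :
  continuous f x -> continuous g x -> continuous (fun y => (f y, g y) : C) x.
Proof.
  intros Hf Hg.
  apply (continuous_comp_2 f g (fun a b => (a, b) : C)); auto.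
  eapply continuous_ext. 2: apply continuous_id.
  intros [a b]; reflexivity.
Qed.

Lemma Cfst_cont (w : C) : continuous (fun z : C => fst z) w.
Proof. destruct w as [a b]. apply continuous_fst. Qed.
Lemma Csnd_cont (w : C) : continuous (fun z : C => snd z) w.
Proof. destruct w as [a b]. apply continuous_snd. Qed.

Lemma Rmult_cont {U : UniformSpace} (f g : U -> R) x :
  continuous f x -> continuous g x -> continuous (fun y => f y * g y)%R x.
Proof. intros H1 H2; exact (@continuous_mult U R_AbsRing f g x H1 H2). Qed.
Lemma Rplus_cont {U : UniformSpace} (f g : U -> R) x :
  continuous f x -> continuous g x -> continuous (fun y => f y + g y)%R x.
Proof. intros H1 H2; exact (@continuous_plus U R_AbsRing R_NormedModule f g x H1 H2). Qed.
Lemma Ropp_cont {U : UniformSpace} (f : U -> R) x :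
  continuous f x -> continuous (fun y => - f y)%R x.
Proof. intros H1; exact (@continuous_opp U R_AbsRing R_NormedModule f x H1). Qed.
Lemma Rminus_cont {U : UniformSpace} (f g : U -> R) x :
  continuous f x -> continuous g x -> continuous (fun y => f y - g y)%R x.
Proof. intros; apply Rplus_cont; auto; apply Ropp_cont; auto. Qed.
Lemma Rcomp_cont {U : UniformSpace} (f : U -> R) (h : R -> R) x :
  continuous f x -> continuous h (f x) -> continuous (fun y => h (f y)) x.
Proof. intros; apply (continuous_comp f h); auto. Qed.

Lemma Cfst_cont' {U : UniformSpace} (f : U -> C) x :
  continuous f x -> continuous (fun y => fst (f y)) x.
Proof. intros; apply (continuous_comp f (fun z : C => fst z)); auto; apply Cfst_cont. Qed.
Lemma Csnd_cont' {U : UniformSpace} (f : U -> C) x :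
  continuous f x -> continuous (fun y => snd (f y)) x.
Proof. intros; apply (continuous_comp f (fun z : C => snd z)); auto; apply Csnd_cont. Qed.

Lemma Cmult_cont {U : UniformSpace} (f g : U -> C) x :
  continuous f x -> continuous g x -> continuous (fun y => f y * g y) x.
Proof.
  intros H1 H2.
  eapply continuous_ext with (f := fun y => ((fst (f y) * fst (g y) - snd (f y) * snd (g y))%R,
                                              (fst (f y) * snd (g y) + snd (f y) * fst (g y))%R) : C).
  { intros y; destruct (f y), (g y); reflexivity. }
  apply Cpair_cont.
  - apply Rminus_cont; apply Rmult_cont; auto using Cfst_cont', Csnd_cont'.
  - apply Rplus_cont; apply Rmult_cont; auto using Cfst_cont', Csnd_cont'.
Qed.
Lemma Cplus_cont {U : UniformSpace} (f g : U -> C) x :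
  continuous f x -> continuous g x -> continuous (fun y => f y + g y) x.
Proof.
  intros H1 H2.
  eapply continuous_ext with (f := fun y => ((fst (f y) + fst (g y))%R, (snd (f y) + snd (g y))%R) : C).
  { intros y; destruct (f y), (g y); reflexivity. }
  apply Cpair_cont; apply Rplus_cont; auto using Cfst_cont', Csnd_cont'.
Qed.
Lemma Copp_cont {U : UniformSpace} (f : U -> C) x :
  continuous f x -> continuous (fun y => - f y) x.
Proof.
  intros H1.
  eapply continuous_ext with (f := fun y => ((- fst (f y))%R, (- snd (f y))%R) : C).
  { intros y; destruct (f y); reflexivity. }
  apply Cpair_cont; apply Ropp_cont; auto using Cfst_cont', Csnd_cont'.
Qed.
Lemma Cminus_cont {U : UniformSpace} (f g : U -> C) x :
  continuous f x -> continuous g x -> continuous (fun y => f y - g y) x.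
Proof. intros; apply Cplus_cont; auto; apply Copp_cont; auto. Qed.

Lemma Rderive_cont (f : R -> R) (x : R) : ex_derive f x -> continuous f x.
Proof. intros H. apply (ex_derive_continuous f x H). Qed.

Definition E (t : R) : C := (cos (2*PI*t)%R, sin (2*PI*t)%R).
Definition Ec (t : R) : C := (cos (2*PI*t)%R, (- sin (2*PI*t))%R).

Lemma deriv_main (A B C0 D : C) (t : R) :
  is_derive (fun t => A * E t + B * Ec t + C0 + D * RtoC t) t
            (2 * RtoC PI * Ci * (A * E t - B * Ec t) + D).
Proof.
  destruct A as [a1 a2], B as [b1 b2], C0 as [c1 c2], D as [d1 d2].
  eapply is_derive_ext with (f := fun t =>
    ((a1 * cos (2*PI*t) - a2 * sin (2*PI*t) + (b1 * cos (2*PI*t) + b2 * sin (2*PI*t)) + c1 + d1 * t)%R,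
     (a1 * sin (2*PI*t) + a2 * cos (2*PI*t) + (- b1 * sin (2*PI*t) + b2 * cos (2*PI*t)) + c2 + d2 * t)%R) : C).
  { intros u; unfold E, Ec, RtoC; apply injective_projections; simpl; ring. }
  match goal with |- is_derive _ _ ?l => replace l with
    ((2*PI*(-(a1 * sin (2*PI*t)) - a2 * cos (2*PI*t) - (b1 * sin (2*PI*t) - b2 * cos (2*PI*t))) + d1)%R,
     (2*PI*(a1 * cos (2*PI*t) - a2 * sin (2*PI*t) - (b1 * cos (2*PI*t) + b2 * sin (2*PI*t))) + d2)%R) end.
  2:{ unfold E, Ec, Ci, RtoC; apply injective_projections; simpl; ring. }
  apply Cpair_derive; auto_derive; auto; ring.
Qed.


Lemma Cmod_Ec t : Cmod (Ec t) = 1%R.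
Proof.
  unfold Cmod, Ec; simpl.
  transitivity (sqrt 1); [f_equal|apply sqrt_1].
  pose proof (sin2_cos2 (2*PI*t)). unfold Rsqr in H. lra.
Qed.

Section Alpha.
Variable b1 b2 : R.
Hypothesis Hb : Cmod (b1, b2) < 1.
Let y1 t := (1 - (b1 * cos (2*PI*t) + b2 * sin (2*PI*t)))%R.
Let y2 t := (b1 * sin (2*PI*t) - b2 * cos (2*PI*t))%R.

Lemma y1_pos t : (0 < y1 t)%R.
Proof.
  unfold y1.
  pose proof (re_le_Cmod ((b1,b2) * Ec t)) as H.
  rewrite Cmod_mult, Cmod_Ec, Rmult_1_r in H.
  unfold Re, Ec in H; simpl in H.
  pose proof (Rle_abs (b1 * cos (2 * PI * t) - b2 * - sin (2 * PI * t))).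
  lra.
Qed.

Lemma yN_pos t : (0 < y1 t * y1 t + y2 t * y2 t)%R.
Proof. pose proof (y1_pos t). nra. Qed.

Lemma alpha_int :
  is_RInt (fun t => 2 * RtoC PI - 4 * RtoC PI / (1 - (b1, b2) * Ec t)) 0 1 (RtoC (-2 * PI)).
Proof.
  set (F := fun t => ((-2*PI*t - 2 * atan (y2 t / y1 t))%R, ln (y1 t * y1 t + y2 t * y2 t)) : C).
  set (df := fun t => ((2*PI - 4*PI*y1 t / (y1 t * y1 t + y2 t * y2 t))%R,
                       (4*PI*y2 t / (y1 t * y1 t + y2 t * y2 t))%R) : C).
  assert (Hd : forall x, is_derive F x (df x)).
  { intros x. pose proof (y1_pos x). pose proof (yN_pos x).
    apply Cpair_derive; unfold y1, y2 in *; auto_derive.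
    all: set (c := cos (2 * PI * x)) in *; set (s := sin (2 * PI * x)) in *.
    all: try lra.
    all: field; repeat split; try lra; try nra. }
  assert (Hc : forall x, continuous df x).
  { intros x. pose proof (y1_pos x). pose proof (yN_pos x).
    apply Cpair_cont; apply Rderive_cont; unfold y1, y2 in *; auto_derive; lra. }
  pose proof (@is_RInt_derive C_R_CompleteNormedModule F df 0 1 (fun x _ => Hd x) (fun x _ => Hc x)) as HI.
  replace (RtoC (-2 * PI)) with (minus (F 1%R) (F 0%R)).
  2:{ unfold F, y1, y2, minus, plus, opp; simpl.
      rewrite !Rmult_1_r, !Rmult_0_r, cos_2PI, sin_2PI, cos_0, sin_0.
      unfold RtoC; apply injective_projections; simpl; ring. }
  eapply is_RInt_ext; [|exact HI].
  intros x _. pose proof (y1_pos x). pose proof (yN_pos x).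
  unfold df, Ec, y1, y2 in *.
  set (c := cos (2 * PI * x)) in *; set (s := sin (2 * PI * x)) in *.
  unfold RtoC, Cdiv, Cinv, Cminus, Cplus, Cmult, Copp, Re, Im; simpl.
  apply injective_projections; simpl; field; nra.
Qed.
End Alpha.


Lemma Cderive_cont (f : R -> C) (x : R) : ex_derive f x -> continuous f x.
Proof. intros H. apply (@ex_derive_continuous R_AbsRing C_R_NormedModule f x H). Qed.

Lemma E1 : E 1 = E 0.
Proof. unfold E. rewrite !Rmult_1_r, !Rmult_0_r, cos_2PI, sin_2PI, cos_0, sin_0. reflexivity. Qed.
Lemma Ec1 : Ec 1 = Ec 0.
Proof. unfold Ec. rewrite !Rmult_1_r, !Rmult_0_r, cos_2PI, sin_2PI, cos_0, sin_0. reflexivity. Qed.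

Lemma lin_cont (A B C0 : C) x : continuous (fun t => A * E t + B * Ec t + C0) x.
Proof.
  apply Cderive_cont.
  eexists. eapply is_derive_ext; [|apply (deriv_main A B C0 0)].
  intros t; simpl. unfold RtoC. apply injective_projections; simpl; ring.
Qed.

Lemma omega_int (A B D : C) :
  is_RInt (fun t => 2 * RtoC PI * Ci * (A * E t - B * Ec t) + D) 0 1 D.
Proof.
  set (F := fun t => A * E t + B * Ec t + 0 + D * RtoC t).
  pose proof (@is_RInt_derive C_R_CompleteNormedModule F
     (fun t => 2 * RtoC PI * Ci * (A * E t - B * Ec t) + D) 0 1
     (fun x _ => deriv_main A B 0 D x)) as HI.
  assert (Hc : forall x : R, Rmin 0 1 <= x <= Rmax 0 1 ->
     continuous (fun t => 2 * RtoC PI * Ci * (A * E t - B * Ec t) + D) x).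
  { intros x _.
    eapply continuous_ext; [|apply (lin_cont (2 * RtoC PI * Ci * A) (- (2 * RtoC PI * Ci * B)) D x)].
    intros t; simpl. apply injective_projections; simpl; ring. }
  specialize (HI Hc).
  match type of HI with is_RInt _ _ _ ?m => replace m with D in HI end.
  exact HI.
  unfold F, minus, plus, opp; simpl. rewrite E1, Ec1.
  destruct A, B, D, (E 0), (Ec 0). unfold RtoC; apply injective_projections; simpl; unfold plus, opp; simpl; ring.
Qed.


Lemma Ci2 : Ci * Ci = -1.
Proof. unfold Ci. apply injective_projections; simpl; ring. Qed.

Section Ident.
Variables v c3 w : C.
Let K := c3 * c3 + v * v.
Let c1 := v * w + v * K / 4 * / w - v * v.
Let c2 := K / 4 * / w - w - Ci * c3.
Let d1 := 2 * RtoC PI * Ci * (v * w - v * K / 4 * / w) + 0.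
Hypothesis Hv : v <> 0.
Hypothesis Hw : w <> 0.
Hypothesis Ha : 2 * w - (v + Ci * c3) <> 0.
Hypothesis Hb : 2 * w - (v - Ci * c3) <> 0.
Hypothesis Hu : K - 4 * (w * w) <> 0.

Lemma c1_fact : c1 = v * (2 * w - (v + Ci * c3)) * (2 * w - (v - Ci * c3)) / (4 * w).
Proof. unfold c1, K. field [Ci2]. auto. Qed.
Lemma u_fact : c2 + Ci * c3 = (K - 4 * (w * w)) / (4 * w).
Proof. unfold c2. field. auto. Qed.


Lemma alpha_ident :
  alpha_coef c3 c1 c2 * d1 = 2 * RtoC PI - 4 * RtoC PI / (1 - (v - Ci * c3) / 2 * / w).
Proof.
  unfold alpha_coef. rewrite u_fact, c1_fact. unfold d1, K.
  field [Ci2]. repeat split; auto.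
Qed.

Lemma omega_ident :
  omega2_coef c3 c1 c2 * d1 =
  2 * RtoC PI * Ci * ((- (v * v)) * w - (v * v * K / 4) * / w) + 2 * RtoC PI * Ci * (v * v * v).
Proof.
  unfold omega2_coef. rewrite u_fact. unfold d1, c1.
  field [Ci2]. repeat split; auto.
Qed.
End Ident.


Definition ee (s : R) : C := (cos (PI*s)%R, sin (PI*s)%R).
Definition eec (s : R) : C := (cos (PI*s)%R, (- sin (PI*s))%R).
Definition sq_a (w : C) : R := sqrt ((Cmod w + fst w) / 2).
Definition csqrt (w : C) : C := (sq_a w, (snd w / (2 * sq_a w))%R).
Definition c40 : C := RtoC (1/2).
Definition xx (s : R) (c4 : C) : C := 1 + 2 * (c4 - c40) * (eec s * eec s).
Definition vv (s : R) (c4 : C) : C := eec s * / csqrt (xx s c4).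
Definition KK (c3 v : C) : C := c3 * c3 + v * v.
Definition HH1 (s : R) (c3 c4 : C) (t : R) : C :=
  vv s c4 * E t + vv s c4 * KK c3 (vv s c4) / 4 * Ec t - vv s c4 * vv s c4.
Definition HH2 (s : R) (c3 c4 : C) (t : R) : C :=
  KK c3 (vv s c4) / 4 * Ec t - E t - Ci * c3.
Definition G4 (s : R) : C := ee s * ee s / 2.

Lemma E_Ec t : E t * Ec t = 1.
Proof.
  unfold E, Ec. pose proof (sin2_cos2 (2*PI*t)). unfold Rsqr in H.
  apply injective_projections; simpl; lra.
Qed.
Lemma E_neq0 t : E t <> 0.
Proof. intros H. pose proof (E_Ec t). rewrite H in H0. rewrite Cmult_0_l in H0.
  injection H0. lra. Qed.
Lemma Ec_inv t : Ec t = / E t.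
Proof. pose proof (E_Ec t). pose proof (E_neq0 t).
  rewrite <- (Cmult_1_l (/ E t)). rewrite <- H. field. auto. Qed.
Lemma Cmod_E t : Cmod (E t) = 1%R.
Proof.
  unfold Cmod, E; simpl.
  transitivity (sqrt 1); [f_equal|apply sqrt_1].
  pose proof (sin2_cos2 (2*PI*t)). unfold Rsqr in H. lra.
Qed.
Lemma ee_eec s : ee s * eec s = 1.
Proof.
  unfold ee, eec. pose proof (sin2_cos2 (PI*s)). unfold Rsqr in H.
  apply injective_projections; simpl; lra.
Qed.
Lemma Cmod_eec s : Cmod (eec s) = 1%R.
Proof.
  unfold Cmod, eec; simpl.
  transitivity (sqrt 1); [f_equal|apply sqrt_1].
  pose proof (sin2_cos2 (PI*s)). unfold Rsqr in H. lra.
Qed.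
Lemma Cmod_ee s : Cmod (ee s) = 1%R.
Proof.
  unfold Cmod, ee; simpl.
  transitivity (sqrt 1); [f_equal|apply sqrt_1].
  pose proof (sin2_cos2 (PI*s)). unfold Rsqr in H. lra.
Qed.

Lemma Cmod_2 : Cmod 2 = 2%R.
Proof. rewrite Cmod_R. apply Rabs_right. lra. Qed.

Lemma Cmod_fst_pos w : (0 < fst w)%R -> (0 < Cmod w + fst w)%R.
Proof. intros H. pose proof (re_le_Cmod w). unfold Re in H0.
  pose proof (Rle_abs (fst w)). lra. Qed.

Lemma sq_a_pos w : (0 < fst w)%R -> (0 < sq_a w)%R.
Proof. intros H. unfold sq_a. apply sqrt_lt_R0. pose proof (Cmod_fst_pos w H). lra. Qed.

Lemma csqrt_sq w : (0 < fst w)%R -> csqrt w * csqrt w = w.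
Proof.
  intros H. pose proof (sq_a_pos w H) as Ha. pose proof (Cmod_fst_pos w H) as Hm.
  assert (Ha2 : (sq_a w * sq_a w = (Cmod w + fst w)/2)%R).
  { unfold sq_a. apply sqrt_sqrt. lra. }
  pose proof (Cmod2_alt w) as Hm2. unfold Re, Im in Hm2.
  unfold csqrt. destruct w as [w1 w2]. simpl in *.
  set (a := sq_a (w1, w2)) in *. set (m := Cmod (w1, w2)) in *.
  apply injective_projections; simpl.
  - assert (Heq : (w2 / (2 * a) * (w2 / (2 * a)) = w2 * w2 / (4 * (a * a)))%R) by (field; lra).
    rewrite Heq, Ha2. field_simplify; [|lra]. apply (Rmult_eq_reg_r (8 * m + 8 * w1)); [|lra]. unfold Rdiv. rewrite Rmult_assoc, Rinv_l; [|lra]. nra.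
  - field. lra.
Qed.

Lemma csqrt_neq0 w : (0 < fst w)%R -> csqrt w <> 0.
Proof. intros H Hc. pose proof (sq_a_pos w H). unfold csqrt in Hc. injection Hc. lra. Qed.

Section Facts.
Variables (s : R) (c4 : C).
Hypothesis H4 : (Cmod (c4 - c40) < 1/10)%R.

Lemma xx_re : (4/5 < fst (xx s c4))%R.
Proof.
  unfold xx.
  set (y := 2 * (c4 - c40) * (eec s * eec s)).
  assert (Cmod y < 1/5)%R.
  { unfold y. rewrite !Cmod_mult, Cmod_eec, Cmod_2. lra. }
  pose proof (re_le_Cmod y). unfold Re in H0.
  assert (Rabs (fst y) < 1/5)%R by lra. apply Rabs_def2 in H1.
  change (4/5 < 1 + fst y)%R. lra.
Qed.

Lemma xx_neq0 : xx s c4 <> 0.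
Proof. intros H. pose proof xx_re. rewrite H in H0. simpl in H0. lra. Qed.

Lemma q_sq : csqrt (xx s c4) * csqrt (xx s c4) = xx s c4.
Proof. apply csqrt_sq. pose proof xx_re. lra. Qed.

Lemma q_neq0 : csqrt (xx s c4) <> 0.
Proof. apply csqrt_neq0. pose proof xx_re. lra. Qed.

Lemma eec_neq0 : eec s <> 0.
Proof. intros H. pose proof (Cmod_eec s). rewrite H, Cmod_0 in H0. lra. Qed.

Lemma vv_neq0 : vv s c4 <> 0.
Proof.
  intros H. pose proof q_neq0.
  assert (eec s = vv s c4 * csqrt (xx s c4)) by (unfold vv; field; auto).
  rewrite H, Cmult_0_l in H1. apply eec_neq0; auto.
Qed.

Lemma vv_sq : vv s c4 * vv s c4 * (2 * (G4 s + (c4 - c40))) = 1.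
Proof.
  pose proof q_neq0. pose proof q_sq. pose proof xx_neq0. pose proof (ee_eec s).
  unfold vv, G4.
  set (q := csqrt (xx s c4)) in *.
  transitivity (eec s * eec s * (ee s * ee s + 2 * (c4 - c40)) / (q * q)).
  { field. auto. }
  rewrite H0. unfold xx in *. field [H2]. auto.
Qed.

Lemma Cmod_vv : (Cmod (vv s c4) < 6/5)%R.
Proof.
  pose proof q_neq0. pose proof q_sq. pose proof xx_re.
  pose proof (re_le_Cmod (xx s c4)). unfold Re in H2. pose proof (Rle_abs (fst (xx s c4))).
  assert (Hq : (Cmod (csqrt (xx s c4)) * Cmod (csqrt (xx s c4)) = Cmod (xx s c4))%R).
  { rewrite <- Cmod_mult, H0. reflexivity. }
  pose proof (Cmod_ge_0 (csqrt (xx s c4))).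
  assert (5/6 < Cmod (csqrt (xx s c4)))%R by nra.
  unfold vv. rewrite Cmod_mult, Cmod_eec, Cmod_inv; auto. rewrite Rmult_1_l.
  apply (Rmult_lt_reg_r (Cmod (csqrt (xx s c4)))); [lra|].
  rewrite Rinv_l; lra.
Qed.
End Facts.


Lemma Cmod_Ci : Cmod Ci = 1%R.
Proof. unfold Cmod, Ci; simpl. transitivity (sqrt 1); [f_equal; ring|apply sqrt_1]. Qed.

Lemma nz_lin (w p : C) : Cmod w = 1%R -> (Cmod p < 2)%R -> 2 * w - p <> 0.
Proof.
  intros Hw Hp H. assert (p = 2 * w). { assert (p = 2 * w - (2 * w - p)) by ring. rewrite H in H0. rewrite H0; ring. }
  rewrite H0, Cmod_mult, Cmod_2, Hw in Hp. lra.
Qed.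

Lemma nz_quad (w K : C) : Cmod w = 1%R -> (Cmod K < 4)%R -> K - 4 * (w * w) <> 0.
Proof.
  intros Hw Hp H. assert (K = 4 * (w * w)). { assert (K = (K - 4 * (w * w)) + 4 * (w * w)) by ring. rewrite H, Cplus_0_l in H0. auto. }
  assert (Cmod 4 = 4%R) by (rewrite Cmod_R; apply Rabs_right; lra).
  rewrite H0, !Cmod_mult, H1, Hw in Hp. lra.
Qed.

Section Per.
Variables (s : R) (c3 c4 : C).
Hypothesis H3 : (Cmod c3 < 1/10)%R.
Hypothesis H4 : (Cmod (c4 - c40) < 1/10)%R.
Let v := vv s c4.

Lemma Cmod_vpm : (Cmod (v + Ci * c3) < 2)%R /\ (Cmod (v - Ci * c3) < 2)%R.
Proof.
  pose proof (Cmod_vv s c4 H4). fold v in H.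
  pose proof (Cmod_triangle v (Ci * c3)). pose proof (Cmod_triangle v (- (Ci * c3))).
  rewrite Cmod_opp, Cmod_mult, Cmod_Ci in *. unfold Cminus. lra.
Qed.

Lemma Cmod_K : (Cmod (KK c3 v) < 4)%R.
Proof.
  pose proof (Cmod_vv s c4 H4). fold v in H. pose proof (Cmod_ge_0 c3). pose proof (Cmod_ge_0 v).
  unfold KK. pose proof (Cmod_triangle (c3 * c3) (v * v)). rewrite !Cmod_mult in H2. nra.
Qed.

Lemma HH1_eq t : HH1 s c3 c4 t = v * E t + v * (c3 * c3 + v * v) / 4 * / E t - v * v.
Proof. unfold HH1, KK. fold v. rewrite Ec_inv. reflexivity. Qed.
Lemma HH2_eq t : HH2 s c3 c4 t = (c3 * c3 + v * v) / 4 * / E t - E t - Ci * c3.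
Proof. unfold HH2, KK. fold v. rewrite Ec_inv. reflexivity. Qed.

Definition dH1 (t : R) : C := 2 * RtoC PI * Ci * (v * E t - v * KK c3 v / 4 * Ec t) + 0.

Lemma HH1_deriv t : is_derive (HH1 s c3 c4) t (dH1 t).
Proof.
  eapply is_derive_ext; [|apply (deriv_main v (v * KK c3 v / 4) (- (v * v)) 0 t)].
  intros u. unfold HH1. fold v. match goal with |- ?a = ?b => change (@eq C a b) end. ring.
Qed.

Lemma dH1_eq t : dH1 t = 2 * RtoC PI * Ci * (v * E t - v * (c3 * c3 + v * v) / 4 * / E t) + 0.
Proof. unfold dH1, KK. rewrite Ec_inv. reflexivity. Qed.

Lemma period_alpha : line_integral (alpha_coef c3) (HH1 s c3 c4) (HH2 s c3 c4) (RtoC (-2 * PI)).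
Proof.
  exists dH1. split; [apply HH1_deriv|].
  set (b := (v - Ci * c3) / 2).
  assert (Hb : (Cmod (fst b, snd b) < 1)%R).
  { rewrite <- surjective_pairing. unfold b. rewrite Cmod_div, Cmod_2.
    destruct Cmod_vpm. lra. intros H; injection H; lra. }
  eapply is_RInt_ext; [|apply (alpha_int (fst b) (snd b) Hb)].
  intros t _. rewrite <- surjective_pairing. unfold b.
  rewrite HH1_eq, HH2_eq, dH1_eq, Ec_inv.
  pose proof (vv_neq0 s c4 H4). fold v in H.
  destruct Cmod_vpm. pose proof Cmod_K. unfold KK in H2.
  rewrite alpha_ident; auto.
  - apply E_neq0.
  - apply nz_lin; auto. apply Cmod_E.
  - apply nz_lin; auto. apply Cmod_E.
  - apply nz_quad; auto. apply Cmod_E.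
Qed.

Lemma period_omega : line_integral (omega2_coef c3) (HH1 s c3 c4) (HH2 s c3 c4)
   (2 * RtoC PI * Ci * (v * v * v)).
Proof.
  exists dH1. split; [apply HH1_deriv|].
  eapply is_RInt_ext; [|apply (omega_int (- (v * v)) (v * v * KK c3 v / 4))].
  intros t _.
  rewrite HH1_eq, HH2_eq, dH1_eq, Ec_inv.
  pose proof (vv_neq0 s c4 H4). fold v in H.
  destruct Cmod_vpm. pose proof Cmod_K. unfold KK in *.
  rewrite omega_ident; auto.
  - apply E_neq0.
  - apply nz_quad; auto. apply Cmod_E.
Qed.
End Per.


Lemma Rconst_cont {U : UniformSpace} (c : R) (x : U) : continuous (fun _ => c) x.
Proof. apply continuous_const. Qed.
Lemma Cconst_cont {U : UniformSpace} (c : C) (x : U) : continuous (fun _ => c) x.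
Proof. apply continuous_const. Qed.

Lemma Rinv_cont {U : UniformSpace} (f : U -> R) x :
  continuous f x -> f x <> 0%R -> continuous (fun y => / f y)%R x.
Proof. intros; apply (Rcomp_cont f Rinv); auto. apply continuous_Rinv; auto. Qed.
Lemma Rsqrt_cont {U : UniformSpace} (f : U -> R) x :
  continuous f x -> continuous (fun y => sqrt (f y)) x.
Proof. intros; apply (Rcomp_cont f sqrt); auto. apply continuous_sqrt. Qed.
Lemma Rcos_cont {U : UniformSpace} (f : U -> R) x :
  continuous f x -> continuous (fun y => cos (f y)) x.
Proof. intros; apply (Rcomp_cont f cos); auto. apply continuous_cos. Qed.
Lemma Rsin_cont {U : UniformSpace} (f : U -> R) x :
  continuous f x -> continuous (fun y => sin (f y)) x.
Proof. intros; apply (Rcomp_cont f sin); auto. apply continuous_sin. Qed.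

Lemma Cmod_cont {U : UniformSpace} (f : U -> C) x :
  continuous f x -> continuous (fun y => Cmod (f y)) x.
Proof.
  intros H. unfold Cmod. apply Rsqrt_cont. simpl.
  apply Rplus_cont; apply Rmult_cont; try apply Rmult_cont;
    auto using Cfst_cont', Csnd_cont', Rconst_cont.
Qed.

Lemma csqrt_cont {U : UniformSpace} (f : U -> C) x :
  continuous f x -> (0 < fst (f x))%R -> continuous (fun y => csqrt (f y)) x.
Proof.
  intros H Hp. pose proof (sq_a_pos _ Hp).
  assert (Ha : continuous (fun y => sq_a (f y)) x).
  { unfold sq_a. apply Rsqrt_cont. unfold Rdiv. apply Rmult_cont; [|apply Rconst_cont].
    apply Rplus_cont; auto using Cmod_cont, Cfst_cont'. }
  unfold csqrt. apply Cpair_cont; auto.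
  unfold Rdiv. apply Rmult_cont; auto using Csnd_cont'.
  apply Rinv_cont. apply Rmult_cont; auto using Rconst_cont. lra.
Qed.

Lemma Cinv_cont {U : UniformSpace} (f : U -> C) x :
  continuous f x -> f x <> 0 -> continuous (fun y => / f y) x.
Proof.
  intros H Hn.
  assert (Hd : (fst (f x) ^ 2 + snd (f x) ^ 2 <> 0)%R).
  { intros Hz. apply Hn. destruct (f x) as [a b]. simpl in Hz.
    assert (a = 0%R) by nra. assert (b = 0%R) by nra. subst. reflexivity. }
  assert (Hc : continuous (fun y => / (fst (f y) ^ 2 + snd (f y) ^ 2))%R x).
  { apply Rinv_cont; auto. simpl.
    apply Rplus_cont; apply Rmult_cont; try apply Rmult_cont;
      auto using Cfst_cont', Csnd_cont', Rconst_cont. }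
  unfold Cinv. apply Cpair_cont; unfold Rdiv; apply Rmult_cont; auto using Cfst_cont'.
  apply Ropp_cont; auto using Csnd_cont'.
Qed.

Lemma Cdiv_cont {U : UniformSpace} (f g : U -> C) x :
  continuous f x -> continuous g x -> g x <> 0 -> continuous (fun y => f y / g y) x.
Proof. intros. unfold Cdiv. apply Cmult_cont; auto. apply Cinv_cont; auto. Qed.

Lemma eec_cont {U : UniformSpace} (f : U -> R) x :
  continuous f x -> continuous (fun y => eec (f y)) x.
Proof.
  intros H. unfold eec. apply Cpair_cont.
  - apply Rcos_cont; apply Rmult_cont; auto using Rconst_cont.
  - apply Ropp_cont; apply Rsin_cont; apply Rmult_cont; auto using Rconst_cont.
Qed.
Lemma ee_cont {U : UniformSpace} (f : U -> R) x :
  continuous f x -> continuous (fun y => ee (f y)) x.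
Proof.
  intros H. unfold ee. apply Cpair_cont.
  - apply Rcos_cont; apply Rmult_cont; auto using Rconst_cont.
  - apply Rsin_cont; apply Rmult_cont; auto using Rconst_cont.
Qed.
Lemma E_cont {U : UniformSpace} (f : U -> R) x :
  continuous f x -> continuous (fun y => E (f y)) x.
Proof.
  intros H. unfold E. apply Cpair_cont.
  - apply Rcos_cont; apply Rmult_cont; auto using Rconst_cont.
  - apply Rsin_cont; apply Rmult_cont; auto using Rconst_cont.
Qed.
Lemma Ec_cont {U : UniformSpace} (f : U -> R) x :
  continuous f x -> continuous (fun y => Ec (f y)) x.
Proof.
  intros H. unfold Ec. apply Cpair_cont.
  - apply Rcos_cont; apply Rmult_cont; auto using Rconst_cont.
  - apply Ropp_cont; apply Rsin_cont; apply Rmult_cont; auto using Rconst_cont.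
Qed.

Lemma vv_cont {U : UniformSpace} (fs : U -> R) (fc : U -> C) x :
  continuous fs x -> continuous fc x -> (Cmod (fc x - c40) < 1/10)%R ->
  continuous (fun y => vv (fs y) (fc y)) x.
Proof.
  intros Hs Hc H4. unfold vv.
  apply Cmult_cont; [apply eec_cont; auto|].
  apply Cinv_cont; [|apply q_neq0; auto].
  apply csqrt_cont; [|pose proof (xx_re (fs x) (fc x) H4); lra].
  unfold xx. apply Cplus_cont; [apply Cconst_cont|].
  apply Cmult_cont; [apply Cmult_cont; [apply Cconst_cont|apply Cminus_cont; auto using Cconst_cont]|].
  apply Cmult_cont; apply eec_cont; auto.
Qed.

Lemma fst_cont' {U V W : UniformSpace} (f : W -> U * V) x :
  continuous f x -> continuous (fun y => fst (f y)) x.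
Proof. intros H. apply (continuous_comp f fst); auto. destruct (f x). apply continuous_fst. Qed.
Lemma snd_cont' {U V W : UniformSpace} (f : W -> U * V) x :
  continuous f x -> continuous (fun y => snd (f y)) x.
Proof. intros H. apply (continuous_comp f snd); auto. destruct (f x). apply continuous_snd. Qed.


Lemma Cmult_neq0 (x y : C) : x <> 0 -> y <> 0 -> x * y <> 0.
Proof. intros Hx Hy H. apply Hy. replace y with (/ x * (x * y)) by (field; auto). rewrite H. ring. Qed.
Lemma Cdiv_neq0 (x y : C) : x <> 0 -> y <> 0 -> x / y <> 0.
Proof. intros Hx Hy H. apply Hx. replace x with (x / y * y) by (field; auto). rewrite H. ring. Qed.

Lemma eec1 : eec 1 = - eec 0.
Proof. unfold eec. rewrite Rmult_1_r, Rmult_0_r, cos_PI, sin_PI, cos_0, sin_0.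
  apply injective_projections; simpl; ring. Qed.

Lemma vv1 c4 : vv 1 c4 = - vv 0 c4.
Proof. unfold vv, xx. rewrite eec1. replace (- eec 0 * - eec 0) with (eec 0 * eec 0) by ring. ring. Qed.

Lemma in_Rc_main s c3 c4 t : (Cmod c3 < 1/10)%R -> (Cmod (c4 - c40) < 1/10)%R ->
  in_Rc c3 (G4 s + (c4 - c40)) (HH1 s c3 c4 t) (HH2 s c3 c4 t).
Proof.
  intros H3 H4.
  pose proof (vv_neq0 s c4 H4) as Hv. pose proof (vv_sq s c4 H4) as Hsq.
  destruct (Cmod_vpm s c3 c4 H3 H4) as [Ha Hb]. pose proof (Cmod_K s c3 c4 H3 H4) as HK.
  pose proof (E_neq0 t) as Hw.
  set (v := vv s c4) in *.
  assert (Hc1 : HH1 s c3 c4 t <> 0).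
  { rewrite HH1_eq; auto. fold v.
    rewrite (c1_fact v c3 (E t)) by auto.
    apply Cdiv_neq0; [apply Cmult_neq0; [apply Cmult_neq0|]|apply Cmult_neq0].
    all: try assumption.
    all: try (apply nz_lin; auto using Cmod_E).
    intros H; injection H; lra. }
  split; [|split; intros [H _]; auto].
  assert (Hc4 : G4 s + (c4 - c40) = / (v * v) / 2).
  { set (g := G4 s + (c4 - c40)) in *.
    replace g with (v * v * (2 * g) / (v * v) / 2) by (field; auto).
    rewrite Hsq. field. auto. }
  rewrite Hc4, HH1_eq, HH2_eq; auto. fold v. clearbody v. generalize dependent (E t). intros w Hw. field [Ci2]. auto.
Qed.

Ltac cstep :=
  match goal with
  | |- continuous (fun _ => vv _ _) _ => apply vv_cont
  | |- continuous (fun _ => E _) _ => apply E_cont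
  | |- continuous (fun _ => Ec _) _ => apply Ec_cont
  | |- continuous (fun _ => Cminus _ _) _ => apply Cminus_cont
  | |- continuous (fun _ => Cplus _ _) _ => apply Cplus_cont
  | |- continuous (fun _ => Cdiv _ _) _ => apply Cdiv_cont
  | |- continuous (fun _ => Cmult _ _) _ => apply Cmult_cont
  | |- continuous (fun _ => Cmult _ _) _ => apply Cmult_cont
  | |- continuous (fun _ => Ci) _ => apply Cconst_cont
  | |- continuous (fun _ => RtoC _) _ => apply Cconst_cont
  | |- continuous _ _ => assumption
  end.

Lemma HH1_cont {U : UniformSpace} fs fc3 fc4 ft (x : U) :
  continuous fs x -> continuous fc3 x -> continuous fc4 x -> continuous ft x ->
  (Cmod (fc4 x - c40) < 1/10)%R ->
  continuous (fun y => HH1 (fs y) (fc3 y) (fc4 y) (ft y)) x.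
Proof.
  intros Hs H3 H4 Ht Hm. unfold HH1, KK.
  repeat cstep. all: try assumption.
  intros H; injection H; lra.
Qed.

Lemma HH2_cont {U : UniformSpace} fs fc3 fc4 ft (x : U) :
  continuous fs x -> continuous fc3 x -> continuous fc4 x -> continuous ft x ->
  (Cmod (fc4 x - c40) < 1/10)%R ->
  continuous (fun y => HH2 (fs y) (fc3 y) (fc4 y) (ft y)) x.
Proof.
  intros Hs H3 H4 Ht Hm. unfold HH2, KK.
  repeat cstep. all: try assumption.
  intros H; injection H; lra.
Qed.

Theorem theorem3 :
  exists (c30 c40 : C) (G3 G4 : R -> C) (eps : R),
    (0 < eps)%R /\
    (* Gamma = (G3, G4) : [0,1] -> C^2 is a continuous loop based at (c30, c40) *)
    (forall s : R, (0 <= s <= 1)%R -> continuous G3 s /\ continuous G4 s) /\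
    G3 0%R = c30 /\ G4 0%R = c40 /\ G3 1%R = c30 /\ G4 1%R = c40 /\
    (* the loop (and its translates to nearby base points c) avoids {c4 = 0} *)
    (forall (s : R) (c3 c4 : C), (0 <= s <= 1)%R ->
        (Cmod (c3 - c30) < eps)%R -> (Cmod (c4 - c40) < eps)%R ->
        G4 s + (c4 - c40) <> RtoC 0) /\
    (* a family of closed curves gamma_{s,c} on R_{Gamma_c(s)},
       Gamma_c(s) = Gamma(s) + (c - c0), depending continuously on (s, c, t) *)
    exists H1 H2 : R -> C -> C -> R -> C,
      (forall (s : R) (c3 c4 : C) (t : R), (0 <= s <= 1)%R ->
         (Cmod (c3 - c30) < eps)%R -> (Cmod (c4 - c40) < eps)%R ->
         continuous (fun x : R * C * C * R => H1 (fst (fst (fst x))) (snd (fst (fst x)))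
                                                 (snd (fst x)) (snd x)) (s, c3, c4, t) /\
         continuous (fun x : R * C * C * R => H2 (fst (fst (fst x))) (snd (fst (fst x)))
                                                 (snd (fst x)) (snd x)) (s, c3, c4, t)) /\
      (forall (s : R) (c3 c4 : C) (t : R), (0 <= s <= 1)%R -> (0 <= t <= 1)%R ->
         (Cmod (c3 - c30) < eps)%R -> (Cmod (c4 - c40) < eps)%R ->
         in_Rc (G3 s + (c3 - c30)) (G4 s + (c4 - c40)) (H1 s c3 c4 t) (H2 s c3 c4 t)) /\
      (forall (s : R) (c3 c4 : C), (0 <= s <= 1)%R ->
         (Cmod (c3 - c30) < eps)%R -> (Cmod (c4 - c40) < eps)%R ->
         H1 s c3 c4 0%R = H1 s c3 c4 1%R /\ H2 s c3 c4 0%R = H2 s c3 c4 1%R) /\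
      (* periods before (s = 0) and after (s = 1) one circuit of Gamma,
         as functions of c near c0 *)
      (forall c3 c4 : C,
         (Cmod (c3 - c30) < eps)%R -> (Cmod (c4 - c40) < eps)%R ->
         exists P0 P1 Q0 Q1 : C,
           line_integral (alpha_coef c3) (H1 0%R c3 c4) (H2 0%R c3 c4) P0 /\
           line_integral (alpha_coef c3) (H1 1%R c3 c4) (H2 1%R c3 c4) P1 /\
           line_integral (omega2_coef c3) (H1 0%R c3 c4) (H2 0%R c3 c4) Q0 /\
           line_integral (omega2_coef c3) (H1 1%R c3 c4) (H2 1%R c3 c4) Q1 /\
           P1 = - (4 * RtoC PI) - P0 /\
           Q1 = - Q0).
Proof.
  exists (RtoC 0), c40, (fun _ => RtoC 0), G4, (1/10)%R.
  split; [lra|].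
  split.
  { intros s _. split; [apply continuous_const|].
    unfold G4. apply Cdiv_cont.
    - apply Cmult_cont; apply ee_cont; apply continuous_id.
    - apply continuous_const.
    - intros H; injection H; lra. }
  assert (HG0 : G4 0%R = c40).
  { unfold G4, ee, c40. rewrite Rmult_0_r, cos_0, sin_0.
    unfold RtoC, Cdiv, Cinv, Cmult; apply injective_projections; simpl; field. }
  assert (HG1 : G4 1%R = c40).
  { unfold G4, ee, c40. rewrite Rmult_1_r, cos_PI, sin_PI.
    unfold RtoC, Cdiv, Cinv, Cmult; apply injective_projections; simpl; field. }
  split; [reflexivity|]. split; [exact HG0|]. split; [reflexivity|]. split; [exact HG1|].
  split.
  { intros s c3 c4 _ _ H4 H.
    assert (HG : Cmod (G4 s) = (1/2)%R).
    { unfold G4. rewrite Cmod_div, Cmod_mult, Cmod_ee, Cmod_2. lra.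
      intros H'; injection H'; lra. }
    assert (G4 s = - (c4 - c40)).
    { replace (G4 s) with (G4 s + (c4 - c40) - (c4 - c40)) by ring. rewrite H. ring. }
    rewrite H0, Cmod_opp in HG. lra. }
  exists HH1, HH2.
  assert (Hc3 : forall c3 : C, c3 - RtoC 0 = c3) by (intros; ring).
  split.
  { intros s c3 c4 t _ _ H4. split.
    - apply (HH1_cont (fun x : R * C * C * R => fst (fst (fst x)))
                      (fun x : R * C * C * R => snd (fst (fst x)))
                      (fun x : R * C * C * R => snd (fst x))
                      (fun x : R * C * C * R => snd x)).
      all: try (repeat first [apply fst_cont' | apply snd_cont' | apply continuous_id]).
      simpl. exact H4.
    - apply (HH2_cont (fun x : R * C * C * R => fst (fst (fst x)))
                      (fun x : R * C * C * R => snd (fst (fst x)))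
                      (fun x : R * C * C * R => snd (fst x))
                      (fun x : R * C * C * R => snd x)).
      all: try (repeat first [apply fst_cont' | apply snd_cont' | apply continuous_id]).
      simpl. exact H4. }
  split.
  { intros s c3 c4 t _ _ H3 H4. rewrite Hc3 in H3.
    replace (RtoC 0 + (c3 - RtoC 0)) with c3 by ring.
    apply in_Rc_main; auto. }
  split.
  { intros s c3 c4 _ _ _. unfold HH1, HH2. rewrite E1, Ec1. split; reflexivity. }
  intros c3 c4 H3 H4. rewrite Hc3 in H3.
  exists (RtoC (-2 * PI)), (RtoC (-2 * PI)),
         (2 * RtoC PI * Ci * (vv 0 c4 * vv 0 c4 * vv 0 c4)),
         (2 * RtoC PI * Ci * (vv 1 c4 * vv 1 c4 * vv 1 c4)).
  split; [apply period_alpha; auto|].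
  split; [apply period_alpha; auto|].
  split; [apply period_omega; auto|].
  split; [apply period_omega; auto|].
  split.
  - unfold RtoC. apply injective_projections; simpl; ring.
  - rewrite vv1. ring.
Qed.
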